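(* Let $\mathbf d\in\mathbb Z^{\Delta_0}$. Then $\langle\mathbf d,\mathbf d\rangle\ge-\delta\,(d_0-d_\infty)^2$. Moreover, equality holds if and only if $d_{i,j}=\frac{1}{m_i}\bigl((m_i-j)d_0+j\,d_\infty\bigr)$ for all $i\in[1,n]$ and $j\in[1,m_i-1]$.
   Context: $[a,b]=\{l\in\mathbb Z:a\le l\le b\}$. Fix $n\ge3$ and integers $m_1,\dots,m_n\ge2$. $\Delta_0=\{0,\infty\}\cup\{(i,j):i\in[1,n],j\in[1,m_i-1]\}$ (the vertex set of the quiver of the canonical algebra of type $(m_1,\dots,m_n)$). For $\mathbf d\in\mathbb Z^{\Delta_0}$ write $d_{i,0}=d_0$, $d_{i,m_i}=d_\infty$, $d_{i,j}=d_{(i,j)}$. The Ringel form is $\langle\mathbf d',\mathbf d''\rangle=d_0'd_0''+\sum_{i\in[1,n],j\in[1,m_i-1]}d'_{i,j}d''_{i,j}+d'_\infty d''_\infty-\sum_{i\in[1,n],j\in[1,m_i]}d'_{i,j}d''_{i,j-1}+(n-2)d'_\infty d''_0$. Set $\delta=\frac12\bigl(n-2-\frac1{m_1}-\cdots-\frac1{m_n}\bigr)$. *)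

(* Defs.v *)
From mathcomp Require Import all_boot all_order all_algebra.
Set Implicit Arguments. Unset Strict Implicit. Unset Printing Implicit Defensive.
Import Order.TTheory GRing.Theory Num.Theory.
Local Open Scope ring_scope.

(* A dimension vector d in Z^{Delta_0} of the canonical algebra of type
   (m_1,...,m_n) is represented by d_0, d_infty : int and a function
   d : nat -> nat -> int, of which only the entries d i j with
   1 <= i <= n, 1 <= j <= m_i - 1 are relevant. *)

Definition dv (m : nat -> nat) (d0 dinf : int) (d : nat -> nat -> int)
  (i j : nat) : int :=
  if j == 0%N then d0 else if j == m i then dinf else d i j.

Definition ringel (n : nat) (m : nat -> nat)
  (a0 ainf : int) (a : nat -> nat -> int)
  (b0 binf : int) (b : nat -> nat -> int) : int :=
  a0 * b0
  + \sum_(1 <= i < n.+1) \sum_(1 <= j < m i) a i j * b i j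
  + ainf * binf
  - \sum_(1 <= i < n.+1) \sum_(1 <= j < (m i).+1)
        dv m a0 ainf a i j * dv m b0 binf b i j.-1
  + (n%:Z - 2) * ainf * b0.

Definition delta (n : nat) (m : nat -> nat) : rat :=
  (n%:R - 2 - \sum_(1 <= i < n.+1) ((m i)%:R)^-1) / 2.

(* Main.v *)
Require Import Defs.
From mathcomp Require Import all_boot all_order all_algebra.
From mathcomp Require Import ring lra.
Import Order.TTheory GRing.Theory Num.Theory.
Local Open Scope ring_scope.

Section Arm.
Variable x : nat -> rat.

Lemma L1 M : \sum_(i < M) (x i.+1 - x i) = x M - x 0.
Proof. elim: M => [|M IH]; first by rewrite big_ord0 subrr.
by rewrite big_ord_recr /= IH; ring. Qed.

Lemma L2 M c : \sum_(i < M) (x i.+1 - x i - c) ^+ 2 =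
  \sum_(i < M) (x i.+1 - x i) ^+ 2 - 2 * c * (x M - x 0) + M%:R * c ^+ 2.
Proof. elim: M => [|M IH]; first by rewrite !big_ord0; ring.
by rewrite !big_ord_recr /= IH -natr1; ring. Qed.

Lemma L3 M : \sum_(i < M) x i.+1 ^+ 2 - \sum_(i < M) x i.+1 * x i =
  (\sum_(i < M) (x i.+1 - x i) ^+ 2) / 2 + (x M ^+ 2 - x 0 ^+ 2) / 2.
Proof. elim: M => [|M IH]; first by rewrite !big_ord0; ring.
rewrite !big_ord_recr /=.
have -> : \sum_(i < M) x i.+1 ^+ 2 + x M.+1 ^+ 2 -
  (\sum_(i < M) x i.+1 * x i + x M.+1 * x M) =
  (\sum_(i < M) x i.+1 ^+ 2 - \sum_(i < M) x i.+1 * x i) + (x M.+1 ^+ 2 - x M.+1 * x M) by ring.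
by rewrite IH; field. Qed.

Lemma arm_id m : (0 < m)%N ->
  \sum_(1 <= j < m) x j ^+ 2 - \sum_(1 <= j < m.+1) x j * x j.-1
  = (\sum_(i < m) (x i.+1 - x i - (x m - x 0) / m%:R) ^+ 2) / 2
    + (x m - x 0) ^+ 2 / (2 * m%:R) - (x 0 ^+ 2 + x m ^+ 2) / 2.
Proof.
case: m => // k _.
rewrite !big_add1 /= !big_mkord L2.
have H := L3 k.+1. rewrite big_ord_recr /= in H.
have -> : \sum_(i < k) x i.+1 ^+ 2 - \sum_(i < k.+1) x i.+1 * x i =
   \sum_(i < k) x i.+1 ^+ 2 + x k.+1 ^+ 2 - \sum_(i < k.+1) x i.+1 * x i - x k.+1 ^+ 2 by ring.
rewrite H. field. by rewrite addrC natr1 pnatr_eq0.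
Qed.

Lemma arm_eq m : (0 < m)%N ->
  (\sum_(i < m) (x i.+1 - x i - (x m - x 0) / m%:R) ^+ 2 = 0) <->
  (forall j, (j <= m)%N -> x j = ((m - j)%:R * x 0 + j%:R * x m) / m%:R).
Proof.
move=> m0; have mn0 : m%:R != 0 :> rat by rewrite pnatr_eq0 -lt0n.
split.
- move/eqP; rewrite psumr_eq0; last by move=> i _; apply: sqr_ge0.
  move/allP => H.
  have step : forall i, (i < m)%N -> x i.+1 = x i + (x m - x 0) / m%:R.
    move=> i im. have /H : (Ordinal im) \in index_enum 'I_m by rewrite mem_index_enum.
    rewrite /= sqrf_eq0 => /eqP h. by rewrite -[LHS]subr0 -h; ring.
  have lin : forall j, (j <= m)%N -> x j = x 0 + j%:R * ((x m - x 0) / m%:R).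
    elim=> [|j IH] jm; first by ring.
    rewrite step // IH ?(ltnW jm) // -natr1; ring.
  move=> j jm; rewrite lin // natrB //; field; exact: mn0.
- move=> H; apply/eqP; rewrite psumr_eq0; last by move=> i _; apply: sqr_ge0.
  apply/allP => i _ /=. rewrite sqrf_eq0.
  have im := ltn_ord i.
  rewrite (H i.+1 im) (H i (ltnW im)) !natrB ?(ltnW im) // -natr1.
  apply/eqP; field; exact: mn0.
Qed.
End Arm.
Theorem lemma1p7 (n : nat) (m : nat -> nat)
  (hn : (3 <= n)%N) (hm : forall i, (1 <= i <= n)%N -> (2 <= m i)%N)
  (d0 dinf : int) (d : nat -> nat -> int) :
  let q := (ringel n m d0 dinf d d0 dinf d)%:~R : rat in
  q >= - delta n m * ((d0 - dinf)%:~R) ^+ 2 /\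
  (q = - delta n m * ((d0 - dinf)%:~R) ^+ 2 <->
   forall i j, (1 <= i <= n)%N -> (1 <= j <= (m i).-1)%N ->
     (d i j)%:~R = ((m i - j)%:R * d0%:~R + j%:R * dinf%:~R) / (m i)%:R :> rat).
Proof.
move=> q.
pose x i j : rat := (dv m d0 dinf d i j)%:~R.
pose a : rat := d0%:~R. pose b : rat := dinf%:~R.
pose S i := \sum_(k < m i) (x i k.+1 - x i k - (x i (m i) - x i 0) / (m i)%:R) ^+ 2.
have x0 i : x i 0 = a by rewrite /x /dv.
have xm i : (1 <= i <= n)%N -> x i (m i) = b.
  move=> /hm hi; rewrite /x /dv eqxx; case: eqP => // h; by rewrite h in hi.
have xj i j : (1 <= j < m i)%N -> x i j = (d i j)%:~R.
  move=> /andP[j1 jm]; rewrite /x /dv; case: eqP => [h|_]; first by rewrite h in j1.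
  by case: eqP => [h|//]; rewrite h ltnn in jm.
have Hq : q = a ^+ 2 + b ^+ 2 + (n%:R - 2) * a * b + \sum_(1 <= i < n.+1)
   (\sum_(1 <= j < m i) x i j ^+ 2 - \sum_(1 <= j < (m i).+1) x i j * x i j.-1).
  rewrite /q /ringel !(rmorphD, rmorphB, rmorphM, rmorph_sum) /=.
  rewrite rmorphN.
  have -> : \sum_(1 <= i < n.+1) (\sum_(1 <= j < m i) d i j * d i j)%:~R
     = \sum_(1 <= i < n.+1) \sum_(1 <= j < m i) x i j ^+ 2 :> rat.
    apply: eq_bigr => i _; rewrite rmorph_sum; apply: eq_big_nat => j jr.
    by rewrite rmorphM xj // expr2.
  rewrite rmorph_sum /=.
  have -> : \sum_(1 <= i < n.+1) (\sum_(1 <= j < (m i).+1)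
      dv m d0 dinf d i j * dv m d0 dinf d i j.-1)%:~R =
      \sum_(1 <= i < n.+1) \sum_(1 <= j < (m i).+1) x i j * x i j.-1 :> rat.
    apply: eq_bigr => i _; rewrite rmorph_sum.
    by apply: eq_bigr => j _; rewrite rmorphM.
  rewrite sumrB /a /b; ring.
have Sge i : 0 <= S i by apply: sumr_ge0 => k _; apply: sqr_ge0.
have E : forall i, (1 <= i < n.+1)%N ->
   \sum_(1 <= j < m i) x i j ^+ 2 - \sum_(1 <= j < (m i).+1) x i j * x i j.-1
   = S i / 2 + (b - a) ^+ 2 / 2 * ((m i)%:R)^-1 - (a ^+ 2 + b ^+ 2) / 2.
  move=> i ir; have mi := hm i ir.
  have mn0 : (m i)%:R != 0 :> rat by rewrite pnatr_eq0; case: (m i) mi.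
  rewrite arm_id; last by case: (m i) mi.
  rewrite /S x0 xm //; field; exact: mn0.
rewrite (eq_big_nat _ _ E) in Hq.
have Key : q + delta n m * ((d0 - dinf)%:~R) ^+ 2 = (\sum_(1 <= i < n.+1) S i) / 2.
  rewrite Hq /delta rmorphB /= -/a -/b !big_split /= sumrN -!mulr_suml -mulr_sumr.
  rewrite sumr_const_nat subn1 /=. rewrite -[_ *+ n]mulr_natr. by field.
have qE : q = (\sum_(1 <= i < n.+1) S i) / 2 - delta n m * ((d0 - dinf)%:~R) ^+ 2.
  by rewrite -Key; ring.
have Tge : 0 <= \sum_(1 <= i < n.+1) S i by apply: sumr_ge0 => i _.
split.
  by rewrite qE; have := divr_ge0 Tge (ler0n _ 2); lra.
rewrite qE; split.
- move=> h.
  have T0 : \sum_(1 <= i < n.+1) S i = 0.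
    have : (\sum_(1 <= i < n.+1) S i) / 2 = 0 by move: h; lra.
    by move/eqP; rewrite mulf_eq0 invr_eq0 orbF => /eqP.
  move=> i j ir jr.
  move/eqP: T0; rewrite big_nat psumr_eq0; last by move=> k _.
  move/allP/(_ i); rewrite mem_index_iota => /(_ ir) /=; rewrite ir /= => /eqP Si.
  have mi := hm i ir.
  have m0 : (0 < m i)%N by case: (m i) mi.
  have H := proj1 (arm_eq (x i) (m i) m0) Si.
  have jm : (1 <= j < m i)%N by case: (m i) mi jr.
  move: (H j (ltnW (proj2 (andP jm)))).
  by rewrite -xj // x0 xm.
- move=> H.
  suff -> : \sum_(1 <= i < n.+1) S i = 0 by rewrite mul0r; ring.
  rewrite big_nat; apply: big1 => i ir.
  have mi := hm i ir.
  have m0 : (0 < m i)%N by case: (m i) mi.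
  apply/(arm_eq (x i) (m i) m0) => j jm.
  rewrite x0 xm //.
  case: (posnP j) => [->|j0].
    rewrite x0 subn0 mul0r addr0; field. by rewrite pnatr_eq0 -lt0n.
  case: (ltngtP j (m i)) jm => // [jlt | ->] _.
    rewrite xj ?j0 ?jlt // H // j0 /=; by case: (m i) jlt.
  rewrite xm // subnn mul0r add0r; field. by rewrite pnatr_eq0 -lt0n.
Qed.
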